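(* $\widetilde{\mathbb{R}}_{sm}$ is an $f$-ring: it is an $l$-ring (with the order $\le$, $\vee=\max$, $\wedge=\min$) and for all $r,s,t\in\widetilde{\mathbb{R}}_{sm}$ with $t\ge0$ one has $(r\wedge s)t=rt\wedge st$.
   Context: Let $I=(0,1]$. $\widetilde{\mathbb{R}}_{sm}=\mathcal{E}_{M,sm}/\mathcal{N}_{sm}$ where $\mathcal{E}_{M,sm}$ is the set of smooth $(r_\varepsilon)_{\varepsilon\in I}\in\mathbb{R}^I$ with $|r_\varepsilon|=O(\varepsilon^{-N})$ for some $N$, and $\mathcal{N}_{sm}$ those smooth nets with $|r_\varepsilon|=O(\varepsilon^m)$ for all $m$. Similarly $\widetilde{\mathbb{R}}_{co}$ is defined with continuous nets; the natural map $\tau_{sm}:\widetilde{\mathbb{R}}_{sm}\to\widetilde{\mathbb{R}}_{co}$ is a ring isomorphism. $r\le s$ means there are representatives with $r_\varepsilon\le s_\varepsilon$ for all $\varepsilon$. $r\wedge s=\min(r,s)=\tau_{sm}^{-1}([(\min(r_\varepsilon,s_\varepsilon))_\varepsilon])$ and $r\vee s=\max(r,s)=\tau_{sm}^{-1}([(\max(r_\varepsilon,s_\varepsilon))_\varepsilon])$. *)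

(* Defs.v *)
From Stdlib Require Import Reals.
From Coquelicot Require Import Coquelicot.
Open Scope R_scope.

(* Nets indexed by eps in I = (0,1]; values outside I are irrelevant. *)
Definition net := R -> R.

Definition inI (e : R) : Prop := 0 < e <= 1.

(* smooth on I = (0,1]: C^infinity on an open interval (0, 1+delta) containing I *)
Definition smooth_I (r : net) : Prop :=
  exists delta : R, 0 < delta /\
    forall (n : nat) (x : R), 0 < x < 1 + delta -> ex_derive_n r n x.

Definition moderate (r : net) : Prop :=
  exists (N : nat) (C eps0 : R), 0 < eps0 /\
    forall e, 0 < e <= eps0 -> Rabs (r e) <= C / e ^ N.

Definition negligible (r : net) : Prop :=
  forall m : nat, exists C eps0 : R, 0 < eps0 /\
    forall e, 0 < e <= eps0 -> Rabs (r e) <= C * e ^ m.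

(* representatives of elements of R~_sm : smooth moderate nets *)
Definition SmMod (r : net) : Prop := smooth_I r /\ moderate r.

(* equality in the quotient  E_{M,sm} / N_sm *)
Definition eqsm (r s : net) : Prop := negligible (fun e => r e - s e).

Definition nadd (r s : net) : net := fun e => r e + s e.
Definition nmul (r s : net) : net := fun e => r e * s e.
Definition nzero : net := fun _ => 0.

Definition lesm (r s : net) : Prop :=
  exists r' s' : net, SmMod r' /\ SmMod s' /\ eqsm r r' /\ eqsm s s' /\
    forall e, inI e -> r' e <= s' e.

(* m represents r /\ s = tau_sm^{-1}([(min(r_eps, s_eps))_eps]) :
   m is a smooth moderate net whose image in R~_co equals the class of
   the continuous net min(r,s) (i.e. differs from it by a negligible net) *)
Definition is_minsm (r s m : net) : Prop :=
  SmMod m /\ negligible (fun e => m e - Rmin (r e) (s e)).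

Definition is_maxsm (r s m : net) : Prop :=
  SmMod m /\ negligible (fun e => m e - Rmax (r e) (s e)).

(* Main.v *)
Require Import Defs.
From Stdlib Require Import Reals Lra Lia Psatz FunctionalExtensionality.
From Coquelicot Require Import Coquelicot.
Open Scope R_scope.

Inductive Gen (B : (R->R)->Prop) : (R->R)->Prop :=
| GB f : B f -> Gen B f
| GC c : Gen B (fun _ => c)
| GA f g : Gen B f -> Gen B g -> Gen B (fun x => f x + g x)
| GM f g : Gen B f -> Gen B g -> Gen B (fun x => f x * g x).

Definition DC (b : R) (B : (R->R)->Prop) :=
  forall f, B f -> exists g, Gen B g /\ forall x, 0 < x < b -> is_derive f x (g x).

Lemma Gen_mono (B1 B2 : (R->R)->Prop) : (forall f, B1 f -> B2 f) ->
  forall f, Gen B1 f -> Gen B2 f.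
Proof. intros H f G; induction G; [apply GB; auto|apply GC|apply GA|apply GM]; auto. Qed.

Lemma Gen_der b B : DC b B -> forall f, Gen B f ->
  exists g, Gen B g /\ forall x, 0 < x < b -> is_derive f x (g x).
Proof.
  intros HD f HG; induction HG.
  - apply HD; auto.
  - exists (fun _ => 0); split; [apply GC|]. intros; apply (is_derive_const c x).
  - destruct IHHG1 as [f' [H1 D1]]; destruct IHHG2 as [g' [H2 D2]].
    exists (fun x => f' x + g' x); split; [apply GA; auto|].
    intros x Hx; apply (is_derive_plus f g x); auto.
  - destruct IHHG1 as [f' [H1 D1]]; destruct IHHG2 as [g' [H2 D2]].
    exists (fun x => f' x * g x + f x * g' x); split.
    + apply GA; apply GM; auto.
    + intros x Hx. apply (is_derive_mult f g x); auto. intros; apply Rmult_comm.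
Qed.

Lemma locU b x : 0 < x < b -> locally x (fun y => 0 < y < b).
Proof. intros H. apply (open_and _ _ (open_gt 0) (open_lt b)). auto. Qed.

Lemma Gen_smooth b B : DC b B -> forall f, Gen B f -> forall n,
  exists g, Gen B g /\ forall x, 0 < x < b -> Derive_n f n x = g x /\ ex_derive_n f n x.
Proof.
  intros HD f G n; induction n.
  - exists f; split; auto. intros; simpl; auto.
  - destruct IHn as [g [Gg Hg]].
    destruct (Gen_der b B HD g Gg) as [h [Gh Dh]].
    exists h; split; auto. intros x Hx.
    assert (L : locally x (fun y => g y = Derive_n f n y)).
    { apply (filter_imp (fun y => 0 < y < b)); [|apply locU; auto].
      intros y Hy; symmetry; apply Hg; auto. }
    assert (D : is_derive (Derive_n f n) x (h x)).
    { apply (is_derive_ext_loc g); auto. }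
    split; simpl.
    + apply is_derive_unique; auto.
    + exists (h x); auto.
Qed.

Definition SM b f := exists B, DC b B /\ Gen B f.

Lemma SM_smooth b f : SM b f -> forall n x, 0 < x < b -> ex_derive_n f n x.
Proof. intros [B [HD G]] n x Hx. destruct (Gen_smooth b B HD f G n) as [g [_ H]]. apply H; auto. Qed.

Lemma DC_union b B1 B2 : DC b B1 -> DC b B2 -> DC b (fun f => B1 f \/ B2 f).
Proof.
  intros H1 H2 f [Hf|Hf].
  - destruct (H1 f Hf) as [g [G D]]; exists g; split; auto.
    apply (Gen_mono B1); auto.
  - destruct (H2 f Hf) as [g [G D]]; exists g; split; auto.
    apply (Gen_mono B2); auto.
Qed.

Lemma SM_plus b f g : SM b f -> SM b g -> SM b (fun x => f x + g x).
Proof.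
  intros [B1 [D1 G1]] [B2 [D2 G2]]. exists (fun f => B1 f \/ B2 f); split.
  apply DC_union; auto. apply GA; [apply (Gen_mono B1)|apply (Gen_mono B2)]; auto.
Qed.

Lemma SM_mul b f g : SM b f -> SM b g -> SM b (fun x => f x * g x).
Proof.
  intros [B1 [D1 G1]] [B2 [D2 G2]]. exists (fun f => B1 f \/ B2 f); split.
  apply DC_union; auto. apply GM; [apply (Gen_mono B1)|apply (Gen_mono B2)]; auto.
Qed.

Lemma SM_const b c : SM b (fun _ => c).
Proof. exists (fun _ => False); split. intros f []. apply GC. Qed.

Lemma SM_ext b f g : SM b f -> (forall x, f x = g x) -> SM b g.
Proof. intros H E. replace g with f; auto. apply functional_extensionality; auto. Qed.

Lemma SM_opp b f : SM b f -> SM b (fun x => - f x).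
Proof. intros H. apply (SM_ext b (fun x => (fun _ => -1) x * f x)).
  apply SM_mul; auto; apply SM_const. intros; simpl; ring. Qed.

Lemma SM_minus b f g : SM b f -> SM b g -> SM b (fun x => f x - g x).
Proof. intros H1 H2. apply (SM_ext b (fun x => f x + (fun y => - g y) x)).
  apply SM_plus; auto; apply SM_opp; auto. intros; simpl; ring. Qed.

Lemma SM_mono b b' f : b' <= b -> SM b f -> SM b' f.
Proof. intros Hb [B [D G]]. exists B; split; auto.
  intros g Hg. destruct (D g Hg) as [h [Gh Dh]]. exists h; split; auto.
  intros x Hx; apply Dh; lra. Qed.

Lemma smooth_SM r : smooth_I r -> exists b, 1 < b /\ SM b r.
Proof.
  intros [d [Hd H]]. exists (1 + d); split; [lra|].
  exists (fun f => exists n, f = Derive_n r n); split.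
  - intros f [n ->]. exists (Derive_n r (S n)); split.
    + apply GB. exists (S n); auto.
    + intros x Hx. simpl. apply Derive_correct. apply (H (S n) x Hx).
  - apply (GB _ r). exists 0%nat; auto.
Qed.

Lemma SM_smooth_I b r : 1 < b -> SM b r -> smooth_I r.
Proof. intros Hb H. exists (b - 1); split; [lra|]. intros n x Hx.
  apply (SM_smooth b); auto; lra. Qed.

Definition dl (x : R) := exp (- / x).

Lemma der_eq (f : R -> R) x l l' : is_derive f x l -> l = l' -> is_derive f x l'.
Proof. intros H ->; auto. Qed.

Lemma SM_dl b : SM b dl.
Proof.
  set (i := fun x : R => / x).
  exists (fun f => f = dl \/ f = i); split.
  - intros f [->| ->].
    + exists (fun x => (i x * i x) * dl x); split.
      * apply GM; [apply GM|]; apply GB; auto.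
      * intros x Hx. unfold dl, i. auto_derive. lra. field. lra.
    + exists (fun x => (fun _ => -1) x * (i x * i x)); split.
      * apply GM; [apply GC|apply GM; apply GB; auto].
      * intros x Hx. unfold i. auto_derive. lra. field. lra.
  - apply GB; auto.
Qed.

Lemma SM_sqrt b q : SM b q -> (forall x, 0 < x < b -> 0 < q x) ->
  SM b (fun x => sqrt (q x)).
Proof.
  intros [B [D G]] Hq.
  set (s := fun x => sqrt (q x)). set (w := fun x => / sqrt (q x)).
  destruct (Gen_der b B D q G) as [q' [Gq' Dq']].
  assert (Gq2 : Gen (fun f => B f \/ f = s \/ f = w) q').
  { apply (Gen_mono B); auto. }
  exists (fun f => B f \/ f = s \/ f = w); split.
  - intros f [Hf|[->| ->]].
    + destruct (D f Hf) as [g [Gg Dg]]. exists g; split; auto.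
      apply (Gen_mono B); auto.
    + exists (fun x => (fun _ => /2) x * (q' x * w x)); split.
      * apply GM; [apply GC|apply GM; auto; apply GB; auto].
      * intros x Hx. unfold s, w.
        assert (Hp := Hq x Hx). assert (Hs := sqrt_lt_R0 _ Hp).
        eapply der_eq; [apply (is_derive_sqrt q x (q' x)); auto|].
        change (q' x / (2 * sqrt (q x)) = / 2 * (q' x * / sqrt (q x))). field. lra.
    + exists (fun x => (fun _ => -/2) x * (q' x * (w x * (w x * w x)))); split.
      * apply GM; [apply GC|apply GM; auto; repeat apply GM; apply GB; auto].
      * intros x Hx. unfold w.
        assert (Hp := Hq x Hx). assert (Hs := sqrt_lt_R0 _ Hp).
        assert (Hf : is_derive (fun y => / sqrt y) (q x) (-/2 * / (q x * sqrt (q x)))).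
        { auto_derive. lra. rewrite sqrt_sqrt; [|lra]. field. lra. }
        eapply der_eq; [apply (is_derive_comp (fun y => / sqrt y) q x _ _ Hf (Dq' x Hx))|].
        change (q' x * (-/2 * / (q x * sqrt (q x))) = -/2 * (q' x * (/ sqrt (q x) * (/ sqrt (q x) * / sqrt (q x))))).
        assert (sqrt (q x) * sqrt (q x) = q x) by (apply sqrt_sqrt; lra).
        set (t := sqrt (q x)) in *. rewrite <- H. field. lra.
  - apply GB; auto.
Qed.

Lemma pow_le1 e n : 0 <= e <= 1 -> e ^ n <= 1.
Proof. intros H; induction n; simpl; [lra|]. nra. Qed.

Lemma pow_pos e n : 0 < e -> 0 < e ^ n.
Proof. apply pow_lt. Qed.

Definition modp (f : net) := exists (N : nat) (C eps0 : R), 0 < eps0 <= 1 /\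
  forall e, 0 < e <= eps0 -> Rabs (f e) * e ^ N <= C.

Lemma mod_modp f : moderate f -> modp f.
Proof.
  intros [N [C [e0 [He H]]]]. exists N, C, (Rmin e0 1); split.
  { unfold Rmin; destruct Rle_dec; lra. }
  intros e He'. assert (e <= e0) by (unfold Rmin in He'; destruct Rle_dec; lra).
  assert (P := pow_pos e N (proj1 He')).
  specialize (H e (conj (proj1 He') H0)). unfold Rdiv in H.
  apply (Rmult_le_compat_r (e ^ N)) in H; [|lra].
  rewrite Rmult_assoc, Rinv_l in H; lra.
Qed.

Lemma modp_mod f : modp f -> moderate f.
Proof.
  intros [N [C [e0 [He H]]]]. exists N, C, e0; split; [lra|].
  intros e He'. assert (P := pow_pos e N (proj1 He')).
  specialize (H e He'). unfold Rdiv.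
  apply (Rmult_le_reg_r (e ^ N)); auto. rewrite Rmult_assoc, Rinv_l; lra.
Qed.

Lemma modp_bound g f : modp g -> (forall e, 0 < e <= 1 -> Rabs (f e) <= g e) -> modp f.
Proof.
  intros [N [C [e0 [He H]]]] Hb. exists N, C, e0; split; auto.
  intros e He'. specialize (H e He'). specialize (Hb e ltac:(lra)).
  assert (P := pow_pos e N (proj1 He')).
  assert (g e <= Rabs (g e)) by apply Rle_abs. nra.
Qed.

Lemma mod_bound g f : moderate g -> (forall e, 0 < e <= 1 -> Rabs (f e) <= g e) -> moderate f.
Proof. intros H Hb. apply modp_mod, (modp_bound g); auto. apply mod_modp; auto. Qed.

Lemma mod_const c : moderate (fun _ => c).
Proof. exists 0%nat, (Rabs c), 1; split; [lra|]. intros; simpl. unfold Rdiv. rewrite Rinv_1. lra. Qed.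

Lemma mod_plus f g : moderate f -> moderate g -> moderate (fun e => f e + g e).
Proof.
  intros Hf Hg. apply mod_modp in Hf, Hg. apply modp_mod.
  destruct Hf as [N1 [C1 [e1 [He1 H1]]]]. destruct Hg as [N2 [C2 [e2 [He2 H2]]]].
  exists (N1 + N2)%nat, (Rabs C1 + Rabs C2), (Rmin e1 e2); split.
  { unfold Rmin; destruct Rle_dec; lra. }
  intros e He. assert (e <= e1 /\ e <= e2) by (unfold Rmin in He; destruct Rle_dec; lra).
  specialize (H1 e ltac:(lra)). specialize (H2 e ltac:(lra)).
  assert (P1 := pow_pos e N1 (proj1 He)). assert (P2 := pow_pos e N2 (proj1 He)).
  assert (Q1 := pow_le1 e N1 ltac:(lra)). assert (Q2 := pow_le1 e N2 ltac:(lra)).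
  rewrite pow_add. assert (A := Rabs_triang (f e) (g e)).
  assert (Rabs (f e) * e ^ N1 * e ^ N2 <= Rabs (f e) * e ^ N1).
  { assert (0 <= Rabs (f e) * e ^ N1) by (apply Rmult_le_pos; [apply Rabs_pos|lra]). nra. }
  assert (Rabs (g e) * e ^ N2 * e ^ N1 <= Rabs (g e) * e ^ N2).
  { assert (0 <= Rabs (g e) * e ^ N2) by (apply Rmult_le_pos; [apply Rabs_pos|lra]). nra. }
  assert (C1 <= Rabs C1) by apply Rle_abs. assert (C2 <= Rabs C2) by apply Rle_abs.
  assert (0 < e ^ N1 * e ^ N2) by nra.
  apply Rle_trans with ((Rabs (f e) + Rabs (g e)) * (e ^ N1 * e ^ N2)); [nra|]. nra.
Qed.

Lemma mod_mul f g : moderate f -> moderate g -> moderate (fun e => f e * g e).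
Proof.
  intros Hf Hg. apply mod_modp in Hf, Hg. apply modp_mod.
  destruct Hf as [N1 [C1 [e1 [He1 H1]]]]. destruct Hg as [N2 [C2 [e2 [He2 H2]]]].
  exists (N1 + N2)%nat, (C1 * C2), (Rmin e1 e2); split.
  { unfold Rmin; destruct Rle_dec; lra. }
  intros e He. assert (e <= e1 /\ e <= e2) by (unfold Rmin in He; destruct Rle_dec; lra).
  specialize (H1 e ltac:(lra)). specialize (H2 e ltac:(lra)).
  assert (P1 := pow_pos e N1 (proj1 He)). assert (P2 := pow_pos e N2 (proj1 He)).
  rewrite pow_add, Rabs_mult.
  assert (0 <= Rabs (f e) * e ^ N1) by (apply Rmult_le_pos; [apply Rabs_pos|lra]).
  assert (0 <= Rabs (g e) * e ^ N2) by (apply Rmult_le_pos; [apply Rabs_pos|lra]).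
  replace (Rabs (f e) * Rabs (g e) * (e ^ N1 * e ^ N2)) with
    ((Rabs (f e) * e ^ N1) * (Rabs (g e) * e ^ N2)) by ring.
  apply Rmult_le_compat; auto.
Qed.

Lemma mod_abs f : moderate f -> moderate (fun e => Rabs (f e)).
Proof. intros [N [C [e0 [He H]]]]. exists N, C, e0; split; auto.
  intros; rewrite Rabs_Rabsolu; auto. Qed.

Lemma mod_ext g f : moderate g -> (forall e, 0 < e <= 1 -> f e = g e) -> moderate f.
Proof. intros H E. apply (mod_bound (fun e => Rabs (g e))). apply mod_abs; auto.
  intros; rewrite E; auto; lra. Qed.

Lemma mod_opp f : moderate f -> moderate (fun e => - f e).
Proof. intros H. apply (mod_ext (fun e => (fun _ => -1) e * f e)).
  apply mod_mul; auto; apply mod_const. intros; ring. Qed.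

Lemma mod_minus f g : moderate f -> moderate g -> moderate (fun e => f e - g e).
Proof. intros H1 H2. apply (mod_ext (fun e => f e + (fun x => - g x) e)).
  apply mod_plus; auto; apply mod_opp; auto. intros; simpl; ring. Qed.

Lemma negl_bound g f : negligible g -> (forall e, 0 < e <= 1 -> Rabs (f e) <= g e) -> negligible f.
Proof.
  intros H Hb m. destruct (H m) as [C [e0 [He H']]]. exists C, (Rmin e0 1); split.
  { unfold Rmin; destruct Rle_dec; lra. }
  intros e He'. assert (e <= e0 /\ e <= 1) by (unfold Rmin in He'; destruct Rle_dec; lra).
  specialize (H' e ltac:(lra)). specialize (Hb e ltac:(lra)).
  assert (g e <= Rabs (g e)) by apply Rle_abs. lra.
Qed.

Lemma negl_abs f : negligible f -> negligible (fun e => Rabs (f e)).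
Proof. intros H m. destruct (H m) as [C [e0 [He H']]]. exists C, e0; split; auto.
  intros; rewrite Rabs_Rabsolu; auto. Qed.

Lemma negl_ext g f : negligible g -> (forall e, 0 < e <= 1 -> f e = g e) -> negligible f.
Proof. intros H E. apply (negl_bound (fun e => Rabs (g e))). apply negl_abs; auto.
  intros; rewrite E; auto; lra. Qed.

Lemma negl_zero : negligible (fun _ => 0).
Proof. intros m. exists 0, 1; split; [lra|]. intros; rewrite Rabs_R0; lra. Qed.

Lemma negl_plus f g : negligible f -> negligible g -> negligible (fun e => f e + g e).
Proof.
  intros Hf Hg m. destruct (Hf m) as [C1 [e1 [He1 H1]]]. destruct (Hg m) as [C2 [e2 [He2 H2]]].
  exists (C1 + C2), (Rmin e1 e2); split.
  { unfold Rmin; destruct Rle_dec; lra. }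
  intros e He. assert (e <= e1 /\ e <= e2) by (unfold Rmin in He; destruct Rle_dec; lra).
  specialize (H1 e ltac:(lra)). specialize (H2 e ltac:(lra)).
  assert (A := Rabs_triang (f e) (g e)). lra.
Qed.

Lemma negl_mod f : negligible f -> moderate f.
Proof. intros H. destruct (H 0%nat) as [C [e0 [He H']]]. exists 0%nat, C, e0; split; auto.
  intros e He'. specialize (H' e He'). simpl in *. unfold Rdiv; rewrite Rinv_1; lra. Qed.

Lemma negl_mul f g : moderate f -> negligible g -> negligible (fun e => f e * g e).
Proof.
  intros Hf Hg m. apply mod_modp in Hf. destruct Hf as [N [C [e1 [He1 H1]]]].
  destruct (Hg (m + N)%nat) as [C2 [e2 [He2 H2]]].
  exists (C2 * C), (Rmin e1 e2); split.
  { unfold Rmin; destruct Rle_dec; lra. }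
  intros e He. assert (e <= e1 /\ e <= e2) by (unfold Rmin in He; destruct Rle_dec; lra).
  specialize (H1 e ltac:(lra)). specialize (H2 e ltac:(lra)).
  assert (P1 := pow_pos e N (proj1 He)). assert (P2 := pow_pos e m (proj1 He)).
  rewrite pow_add in H2. rewrite Rabs_mult.
  assert (0 <= Rabs (g e)) by apply Rabs_pos. assert (0 <= Rabs (f e)) by apply Rabs_pos.
  assert (0 < e ^ m * e ^ N) by nra. assert (0 <= C2) by nra.
  apply Rle_trans with (Rabs (f e) * (C2 * (e ^ m * e ^ N))).
  { apply Rmult_le_compat_l; auto. }
  replace (Rabs (f e) * (C2 * (e ^ m * e ^ N))) with ((C2 * e ^ m) * (Rabs (f e) * e ^ N)) by ring.
  replace (C2 * C * e ^ m) with ((C2 * e ^ m) * C) by ring.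
  apply Rmult_le_compat_l; auto. nra.
Qed.

Lemma negl_opp f : negligible f -> negligible (fun e => - f e).
Proof. intros H. apply (negl_bound (fun e => Rabs (f e))). apply negl_abs; auto.
  intros; rewrite Rabs_Ropp; lra. Qed.

Lemma negl_minus f g : negligible f -> negligible g -> negligible (fun e => f e - g e).
Proof. intros H1 H2. apply (negl_ext (fun e => f e + (fun x => - g x) e)).
  apply negl_plus; auto; apply negl_opp; auto. intros; simpl; ring. Qed.

Lemma negl_mul' f g : negligible f -> moderate g -> negligible (fun e => f e * g e).
Proof. intros H1 H2. apply (negl_ext (fun e => g e * f e)). apply negl_mul; auto.
  intros; ring. Qed.

Lemma exp_mul_nat n y : exp (INR n * y) = exp y ^ n.
Proof. induction n. simpl. rewrite Rmult_0_l, exp_0; auto.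
  rewrite S_INR, Rmult_plus_distr_r, Rmult_1_l, exp_plus, IHn; simpl; ring. Qed.

Lemma dl_pos e : 0 < dl e.
Proof. apply exp_pos. Qed.

Lemma dl_le1 e : 0 < e -> dl e <= 1.
Proof. intros H. unfold dl. rewrite <- exp_0. left. apply exp_increasing.
  assert (0 < / e) by (apply Rinv_0_lt_compat; auto). lra. Qed.

Lemma negl_dl : negligible dl.
Proof.
  intros m. set (k := S m). exists (INR k ^ k), 1; split; [lra|].
  intros e He. rewrite Rabs_pos_eq by (left; apply dl_pos).
  assert (Hk : 0 < INR k) by (apply lt_0_INR; unfold k; lia).
  set (y := / (e * INR k)).
  assert (Hy : 0 < y) by (apply Rinv_0_lt_compat; nra).
  assert (E : / e = INR k * y) by (unfold y; field; lra).
  assert (X : y < exp y) by (assert (1 + y < exp y) by (apply exp_ineq1; lra); lra).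
  assert (Y : y ^ k <= exp y ^ k) by (apply pow_incr; lra).
  assert (Py : 0 < y ^ k) by (apply pow_lt; auto).
  unfold dl. rewrite exp_Ropp, E, exp_mul_nat.
  apply Rle_trans with (/ y ^ k).
  { apply Rinv_le_contravar; auto. }
  unfold y. rewrite <- pow_inv, Rinv_inv.
  rewrite Rpow_mult_distr. unfold k at 1. simpl pow at 1.
  assert (0 < e ^ m) by (apply pow_lt; lra).
  assert (0 < INR k ^ k) by (apply pow_lt; lra).
  assert (0 < e ^ m * INR k ^ k) by (apply Rmult_lt_0_compat; auto). nra.
Qed.

Lemma smooth_bin (F : (R -> R) -> (R -> R) -> R -> R) a b :
  (forall c, SM c a -> SM c b -> SM c (F a b)) ->
  smooth_I a -> smooth_I b -> smooth_I (F a b).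
Proof.
  intros H Ha Hb. apply smooth_SM in Ha as [c1 [H1 S1]]. apply smooth_SM in Hb as [c2 [H2 S2]].
  assert (1 < Rmin c1 c2 /\ Rmin c1 c2 <= c1 /\ Rmin c1 c2 <= c2) by (unfold Rmin; destruct Rle_dec; lra).
  apply (SM_smooth_I (Rmin c1 c2)); [lra|].
  apply H; [apply (SM_mono c1)|apply (SM_mono c2)]; auto; lra.
Qed.

Lemma SmMod_plus a b : SmMod a -> SmMod b -> SmMod (fun e => a e + b e).
Proof. intros [Sa Ma] [Sb Mb]. split; [|apply mod_plus; auto].
  apply (smooth_bin (fun a b e => a e + b e)); auto. intros; apply SM_plus; auto. Qed.

Lemma SmMod_minus a b : SmMod a -> SmMod b -> SmMod (fun e => a e - b e).
Proof. intros [Sa Ma] [Sb Mb]. split; [|apply mod_minus; auto].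
  apply (smooth_bin (fun a b e => a e - b e)); auto. intros; apply SM_minus; auto. Qed.

Lemma SmMod_mul a b : SmMod a -> SmMod b -> SmMod (fun e => a e * b e).
Proof. intros [Sa Ma] [Sb Mb]. split; [|apply mod_mul; auto].
  apply (smooth_bin (fun a b e => a e * b e)); auto. intros; apply SM_mul; auto. Qed.

Lemma SmMod_const c : SmMod (fun _ => c).
Proof. split; [|apply mod_const]. apply (SM_smooth_I 2); [lra|]. apply SM_const. Qed.

Lemma SmMod_dl : SmMod dl.
Proof. split; [|apply negl_mod, negl_dl]. apply (SM_smooth_I 2); [lra|]. apply SM_dl. Qed.

Definition qq (a b : net) e := (a e - b e) ^ 2 + dl e ^ 2.
Definition Mn (a b : net) e := (a e + b e - sqrt (qq a b e)) / 2.
Definition Mx (a b : net) e := (a e + b e + sqrt (qq a b e)) / 2.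

Lemma qq_pos a b e : 0 < qq a b e.
Proof. unfold qq. assert (H := dl_pos e). assert (0 <= (a e - b e)^2) by (apply pow2_ge_0). nra. Qed.

Lemma SM_sq c a b : SM c a -> SM c b -> SM c (fun e => sqrt (qq a b e)).
Proof.
  intros Ha Hb. apply SM_sqrt; [|intros; apply qq_pos].
  apply (SM_ext c (fun e => (fun x => (fun y => a y - b y) x * (fun y => a y - b y) x) e + (fun x => dl x * dl x) e)).
  - apply SM_plus; apply SM_mul; try apply SM_minus; auto; apply SM_dl.
  - intros; unfold qq; simpl; ring.
Qed.

Lemma sq_bounds x d : 0 <= d -> Rabs x <= sqrt (x ^ 2 + d ^ 2) <= Rabs x + d.
Proof.
  intros Hd. split.
  - rewrite <- sqrt_Rsqr_abs. apply sqrt_le_1_alt. unfold Rsqr. nra.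
  - assert (0 <= Rabs x) by apply Rabs_pos.
    rewrite <- (sqrt_Rsqr (Rabs x + d)) by lra. apply sqrt_le_1_alt. unfold Rsqr.
    assert (Rabs x * Rabs x = x ^ 2). { rewrite <- Rabs_mult. simpl. rewrite Rmult_1_r. apply Rabs_pos_eq. nra. }
    nra.
Qed.

Lemma Rmin_form a b : Rmin a b = (a + b - Rabs (a - b)) / 2.
Proof. unfold Rmin, Rabs; destruct Rle_dec; destruct Rcase_abs; lra. Qed.
Lemma Rmax_form a b : Rmax a b = (a + b + Rabs (a - b)) / 2.
Proof. unfold Rmax, Rabs; destruct Rle_dec; destruct Rcase_abs; lra. Qed.

Lemma Mn_bounds a b e : Rmin (a e) (b e) - dl e / 2 <= Mn a b e <= Rmin (a e) (b e).
Proof. unfold Mn, qq. rewrite Rmin_form. assert (H := sq_bounds (a e - b e) (dl e) (Rlt_le _ _ (dl_pos e))). lra. Qed.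
Lemma Mx_bounds a b e : Rmax (a e) (b e) <= Mx a b e <= Rmax (a e) (b e) + dl e / 2.
Proof. unfold Mx, qq. rewrite Rmax_form. assert (H := sq_bounds (a e - b e) (dl e) (Rlt_le _ _ (dl_pos e))). lra. Qed.

Lemma SmMod_Mn a b : SmMod a -> SmMod b -> SmMod (Mn a b).
Proof.
  intros [Sa Ma] [Sb Mb]. split.
  - apply (smooth_bin Mn); auto. intros c Ha Hb.
    apply (SM_ext c (fun e => (fun x => (a x + b x) - sqrt (qq a b x)) e * (fun _ => /2) e)).
    + apply SM_mul; [|apply SM_const]. apply SM_minus; [apply SM_plus; auto|apply SM_sq; auto].
    + intros; unfold Mn; simpl; field.
  - apply (mod_bound (fun e => Rabs (a e) + Rabs (b e) + 1)).
    + apply mod_plus; [apply mod_plus; apply mod_abs; auto|apply mod_const].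
    + intros e He. assert (H := sq_bounds (a e - b e) (dl e) (Rlt_le _ _ (dl_pos e))).
      assert (dl e <= 1) by (apply dl_le1; lra). assert (0 < dl e) by apply dl_pos.
      unfold Mn, qq. revert H. unfold Rabs; repeat destruct Rcase_abs; intros; lra.
Qed.

Lemma SmMod_Mx a b : SmMod a -> SmMod b -> SmMod (Mx a b).
Proof.
  intros [Sa Ma] [Sb Mb]. split.
  - apply (smooth_bin Mx); auto. intros c Ha Hb.
    apply (SM_ext c (fun e => (fun x => (a x + b x) + sqrt (qq a b x)) e * (fun _ => /2) e)).
    + apply SM_mul; [|apply SM_const]. apply SM_plus; [apply SM_plus; auto|apply SM_sq; auto].
    + intros; unfold Mx; simpl; field.
  - apply (mod_bound (fun e => Rabs (a e) + Rabs (b e) + 1)).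
    + apply mod_plus; [apply mod_plus; apply mod_abs; auto|apply mod_const].
    + intros e He. assert (H := sq_bounds (a e - b e) (dl e) (Rlt_le _ _ (dl_pos e))).
      assert (dl e <= 1) by (apply dl_le1; lra). assert (0 < dl e) by apply dl_pos.
      unfold Mx, qq. revert H. unfold Rabs; repeat destruct Rcase_abs; intros; lra.
Qed.

Lemma Rmin_lip a b c d : Rabs (Rmin a b - Rmin c d) <= Rabs (a - c) + Rabs (b - d).
Proof. unfold Rmin, Rabs; repeat destruct Rle_dec; repeat destruct Rcase_abs; lra. Qed.
Lemma Rmax_lip a b c d : Rabs (Rmax a b - Rmax c d) <= Rabs (a - c) + Rabs (b - d).
Proof. unfold Rmax, Rabs; repeat destruct Rle_dec; repeat destruct Rcase_abs; lra. Qed.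

Lemma negl_Mn a b : negligible (fun e => Mn a b e - Rmin (a e) (b e)).
Proof. apply (negl_bound dl). apply negl_dl. intros e _. assert (H := Mn_bounds a b e).
  assert (0 < dl e) by apply dl_pos. unfold Rabs; destruct Rcase_abs; lra. Qed.
Lemma negl_Mx a b : negligible (fun e => Mx a b e - Rmax (a e) (b e)).
Proof. apply (negl_bound dl). apply negl_dl. intros e _. assert (H := Mx_bounds a b e).
  assert (0 < dl e) by apply dl_pos. unfold Rabs; destruct Rcase_abs; lra. Qed.

Lemma abs4 a b c d : Rabs (a + b + c + d) <= Rabs a + Rabs b + Rabs c + Rabs d.
Proof. assert (H1 := Rabs_triang (a + b + c) d). assert (H2 := Rabs_triang (a + b) c).
  assert (H3 := Rabs_triang a b). lra. Qed.

Lemma absle x y : -y <= x <= y -> Rabs x <= y.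
Proof. intros; apply Rabs_le; auto. Qed.

Ltac lsplit := split; [|split; [|split; [|split]]].

Lemma eqsm_refl r : eqsm r r.
Proof. unfold eqsm. apply (negl_ext (fun _ => 0)); [apply negl_zero|]. intros; ring. Qed.

Lemma P1 r : SmMod r -> lesm r r.
Proof. intros H. exists r, r. lsplit; auto; try apply eqsm_refl. intros; lra. Qed.

Lemma P2 r s : lesm r s -> lesm s r -> eqsm r s.
Proof.
  intros [r1 [s1 [_ [_ [E1 [E2 L1]]]]]] [s2 [r2 [_ [_ [E3 [E4 L2]]]]]].
  unfold eqsm in *.
  apply (negl_bound (fun e => Rabs (r e - r1 e) + Rabs (s e - s1 e) + Rabs (s e - s2 e) + Rabs (r e - r2 e))).
  - repeat apply negl_plus; apply negl_abs; auto.
  - intros e He. specialize (L1 e He). specialize (L2 e He).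
    unfold Rabs; repeat destruct Rcase_abs; lra.
Qed.

Lemma P3 r s t : lesm r s -> lesm s t -> lesm r t.
Proof.
  intros [r1 [s1 [R1 [S1 [E1 [E2 L1]]]]]] [s2 [t2 [S2 [T2 [E3 [E4 L2]]]]]].
  exists (fun e => r1 e + s2 e - s1 e), t2. lsplit; auto.
  - apply SmMod_minus; [apply SmMod_plus|]; auto.
  - unfold eqsm in *.
    apply (negl_ext (fun e => (r e - r1 e) - (s e - s1 e) + (s e - s2 e))).
    + apply negl_plus; [apply negl_minus|]; auto.
    + intros; ring.
  - intros e He. specialize (L1 e He). specialize (L2 e He). lra.
Qed.

Lemma P4 r s t : SmMod t -> lesm r s -> lesm (nadd r t) (nadd s t).
Proof.
  intros Ht [r1 [s1 [R1 [S1 [E1 [E2 L1]]]]]].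
  exists (fun e => r1 e + t e), (fun e => s1 e + t e). lsplit.
  - apply SmMod_plus; auto.
  - apply SmMod_plus; auto.
  - unfold eqsm, nadd in *. apply (negl_ext (fun e => r e - r1 e)); auto. intros; ring.
  - unfold eqsm, nadd in *. apply (negl_ext (fun e => s e - s1 e)); auto. intros; ring.
  - intros e He. specialize (L1 e He). lra.
Qed.

Lemma P5 r s : SmMod r -> SmMod s -> lesm nzero r -> lesm nzero s -> lesm nzero (nmul r s).
Proof.
  intros [_ Mr] [_ Ms] [z1 [r1 [Z1 [R1 [E1 [E2 L1]]]]]] [z2 [s1 [Z2 [S1 [E3 [E4 L2]]]]]].
  unfold eqsm, nzero, nmul in *.
  exists nzero, (fun e => (r1 e - z1 e) * (s1 e - z2 e)). lsplit.
  - unfold nzero; apply SmMod_const.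
  - apply (SmMod_mul (fun e => r1 e - z1 e) (fun e => s1 e - z2 e)); apply SmMod_minus; auto.
  - unfold nzero; apply eqsm_refl.
  - unfold eqsm.
    set (k1 := fun e => - (r e - r1 e) + (0 - z1 e)).
    set (k2 := fun e => - (s e - s1 e) + (0 - z2 e)).
    assert (K1 : negligible k1) by (apply negl_plus; [apply negl_opp|]; auto).
    assert (K2 : negligible k2) by (apply negl_plus; [apply negl_opp|]; auto).
    apply (negl_ext (fun e => - ((r e * k2 e + k1 e * s e) + k1 e * k2 e))).
    + apply negl_opp. apply negl_plus; [apply negl_plus|].
      * apply negl_mul; auto.
      * apply negl_mul'; auto.
      * apply negl_mul; auto. apply negl_mod; auto.
    + intros e _. unfold k1, k2. cbv beta. ring.
  - intros e He. specialize (L1 e He). specialize (L2 e He). unfold nzero. apply Rmult_le_pos; lra.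
Qed.

Lemma P6 r s : SmMod r -> SmMod s -> exists m, is_minsm r s m.
Proof. intros; exists (Mn r s); split; [apply SmMod_Mn; auto|apply negl_Mn]. Qed.
Lemma P8 r s : SmMod r -> SmMod s -> exists m, is_maxsm r s m.
Proof. intros; exists (Mx r s); split; [apply SmMod_Mx; auto|apply negl_Mx]. Qed.

Lemma P7 r s m : SmMod r -> SmMod s -> is_minsm r s m ->
  lesm m r /\ lesm m s /\ (forall u, SmMod u -> lesm u r -> lesm u s -> lesm u m).
Proof.
  intros Hr Hs [Hm Nm].
  assert (Em : eqsm m (Mn r s)).
  { unfold eqsm. apply (negl_ext (fun e => (m e - Rmin (r e) (s e)) - (Mn r s e - Rmin (r e) (s e)))).
    apply negl_minus; auto; apply negl_Mn. intros; ring. }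
  split; [|split].
  - exists (Mn r s), r. lsplit; auto using SmMod_Mn, eqsm_refl.
    intros e _. assert (H := Mn_bounds r s e). assert (Rmin (r e) (s e) <= r e) by apply Rmin_l. lra.
  - exists (Mn r s), s. lsplit; auto using SmMod_Mn, eqsm_refl.
    intros e _. assert (H := Mn_bounds r s e). assert (Rmin (r e) (s e) <= s e) by apply Rmin_r. lra.
  - intros u Hu [u1 [r1 [U1 [R1 [E1 [E2 L1]]]]]] [u2 [s1 [U2 [S1 [E3 [E4 L2]]]]]].
    set (a := r1). set (b := fun e => s1 e + u1 e - u2 e).
    assert (Hb : SmMod b) by (apply SmMod_minus; [apply SmMod_plus|]; auto).
    exists u1, (fun e => Mn a b e + dl e). lsplit; auto.
    + apply SmMod_plus; [apply SmMod_Mn|apply SmMod_dl]; auto.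
    + unfold eqsm in *.
      assert (Na : negligible (fun e => Rabs (r e - a e))) by (apply negl_abs; auto).
      assert (Nb : negligible (fun e => Rabs (s e - b e))).
      { apply negl_abs. apply (negl_ext (fun e => (s e - s1 e) + (u e - u1 e) - (u e - u2 e))).
        apply negl_minus; [apply negl_plus|]; auto. intros; unfold b; ring. }
      apply (negl_bound (fun e => Rabs (m e - Rmin (r e) (s e)) + (Rabs (r e - a e) + Rabs (s e - b e)) + dl e + dl e)).
      { repeat apply negl_plus; auto using negl_dl. apply negl_abs; auto. }
      intros e He. assert (H1 := Rmin_lip (r e) (s e) (a e) (b e)).
      assert (H2 := Mn_bounds a b e). assert (0 < dl e) by apply dl_pos.
      assert (H3 := abs4 (m e - Rmin (r e) (s e)) (Rmin (r e) (s e) - Rmin (a e) (b e)) (Rmin (a e) (b e) - Mn a b e) (- dl e)).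
      assert (H4 : Rabs (Rmin (a e) (b e) - Mn a b e) <= dl e) by (apply absle; lra).
      rewrite Rabs_Ropp, (Rabs_pos_eq (dl e)) in H3 by lra.
      replace (m e - (Mn a b e + dl e)) with (m e - Rmin (r e) (s e) + (Rmin (r e) (s e) - Rmin (a e) (b e)) + (Rmin (a e) (b e) - Mn a b e) + - dl e) by ring.
      lra.
    + intros e He. specialize (L1 e He). specialize (L2 e He).
      assert (H2 := Mn_bounds a b e). assert (0 < dl e) by apply dl_pos.
      assert (u1 e <= Rmin (a e) (b e)) by (apply Rmin_glb; unfold a, b; lra). lra.
Qed.

Lemma P9 r s m : SmMod r -> SmMod s -> is_maxsm r s m ->
  lesm r m /\ lesm s m /\ (forall u, SmMod u -> lesm r u -> lesm s u -> lesm m u).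
Proof.
  intros Hr Hs [Hm Nm].
  assert (Em : eqsm m (Mx r s)).
  { unfold eqsm. apply (negl_ext (fun e => (m e - Rmax (r e) (s e)) - (Mx r s e - Rmax (r e) (s e)))).
    apply negl_minus; auto; apply negl_Mx. intros; ring. }
  split; [|split].
  - exists r, (Mx r s). lsplit; auto using SmMod_Mx, eqsm_refl.
    intros e _. assert (H := Mx_bounds r s e). assert (r e <= Rmax (r e) (s e)) by apply Rmax_l. lra.
  - exists s, (Mx r s). lsplit; auto using SmMod_Mx, eqsm_refl.
    intros e _. assert (H := Mx_bounds r s e). assert (s e <= Rmax (r e) (s e)) by apply Rmax_r. lra.
  - intros u Hu [r1 [u1 [R1 [U1 [E1 [E2 L1]]]]]] [s1 [u2 [S1 [U2 [E3 [E4 L2]]]]]].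
    set (a := r1). set (b := fun e => s1 e + u1 e - u2 e).
    assert (Hb : SmMod b) by (apply SmMod_minus; [apply SmMod_plus|]; auto).
    exists (fun e => Mx a b e - dl e), u1. lsplit; auto.
    + apply SmMod_minus; [apply SmMod_Mx|apply SmMod_dl]; auto.
    + unfold eqsm in *.
      assert (Na : negligible (fun e => Rabs (r e - a e))) by (apply negl_abs; auto).
      assert (Nb : negligible (fun e => Rabs (s e - b e))).
      { apply negl_abs. apply (negl_ext (fun e => (s e - s1 e) + (u e - u1 e) - (u e - u2 e))).
        apply negl_minus; [apply negl_plus|]; auto. intros; unfold b; ring. }
      apply (negl_bound (fun e => Rabs (m e - Rmax (r e) (s e)) + (Rabs (r e - a e) + Rabs (s e - b e)) + dl e + dl e)).
      { repeat apply negl_plus; auto using negl_dl. apply negl_abs; auto. }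
      intros e He. assert (H1 := Rmax_lip (r e) (s e) (a e) (b e)).
      assert (H2 := Mx_bounds a b e). assert (0 < dl e) by apply dl_pos.
      assert (H3 := abs4 (m e - Rmax (r e) (s e)) (Rmax (r e) (s e) - Rmax (a e) (b e)) (Rmax (a e) (b e) - Mx a b e) (dl e)).
      assert (H4 : Rabs (Rmax (a e) (b e) - Mx a b e) <= dl e) by (apply absle; lra).
      rewrite (Rabs_pos_eq (dl e)) in H3 by lra.
      replace (m e - (Mx a b e - dl e)) with (m e - Rmax (r e) (s e) + (Rmax (r e) (s e) - Rmax (a e) (b e)) + (Rmax (a e) (b e) - Mx a b e) + dl e) by ring.
      lra.
    + intros e He. specialize (L1 e He). specialize (L2 e He).
      assert (H2 := Mx_bounds a b e). assert (0 < dl e) by apply dl_pos.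
      assert (Rmax (a e) (b e) <= u1 e) by (apply Rmax_lub; unfold a, b; lra). lra.
Qed.

Lemma fring_pt a b t k : 0 <= k -> -k <= t ->
  Rabs (Rmin a b * t - Rmin (a * t) (b * t)) <= k * (Rabs a + Rabs b).
Proof.
  intros Hk Ht.
  assert (Ha1 : a <= Rabs a) by apply Rle_abs. assert (Ha2 : -a <= Rabs a) by (rewrite <- Rabs_Ropp; apply Rle_abs).
  assert (Hb1 : b <= Rabs b) by apply Rle_abs. assert (Hb2 : -b <= Rabs b) by (rewrite <- Rabs_Ropp; apply Rle_abs).
  apply absle. unfold Rmin.
  destruct (Rle_dec a b); destruct (Rle_dec (a * t) (b * t)); split; nra.
Qed.

Lemma P10 r s t m m' : SmMod r -> SmMod s -> SmMod t -> lesm nzero t ->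
     is_minsm r s m -> is_minsm (nmul r t) (nmul s t) m' ->
     eqsm (nmul m t) m'.
Proof.
  intros [_ Mr] [_ Ms] [_ Mt] [z [t1 [_ [_ [E1 [E2 L]]]]]] [_ Nm] [_ Nm'].
  unfold eqsm, nmul, nzero in *.
  apply (negl_bound (fun e => Rabs ((m e - Rmin (r e) (s e)) * t e) +
     (Rabs (t e - t1 e) + Rabs (0 - z e)) * (Rabs (r e) + Rabs (s e)) +
     Rabs (m' e - Rmin (r e * t e) (s e * t e)))).
  - apply negl_plus; [apply negl_plus|].
    + apply negl_abs. apply negl_mul'; auto.
    + apply negl_mul'. apply negl_plus; apply negl_abs; auto.
      apply mod_plus; apply mod_abs; auto.
    + apply negl_abs; auto.
  - intros e He. specialize (L e He).
    assert (A1 : t e - t1 e <= Rabs (t e - t1 e)) by apply Rle_abs.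
    assert (A2 : - (0 - z e) <= Rabs (0 - z e)) by (rewrite <- Rabs_Ropp; apply Rle_abs).
    assert (B := fring_pt (r e) (s e) (t e) (Rabs (t e - t1 e) + Rabs (0 - z e))).
    assert (K0 : 0 <= Rabs (t e - t1 e) + Rabs (0 - z e)) by (assert (X0 := Rabs_pos (t e - t1 e)); assert (X1 := Rabs_pos (0 - z e)); lra).
    specialize (B ltac:(lra)).
    assert (K1 : - (Rabs (t e - t1 e) + Rabs (0 - z e)) <= t e).
    { assert (X2 := Rle_abs (t1 e - t e)). rewrite Rabs_minus_sym in X2. assert (X3 := Rle_abs (0 - z e)). lra. }
    specialize (B K1).
    assert (T := abs4 ((m e - Rmin (r e) (s e)) * t e) (Rmin (r e) (s e) * t e - Rmin (r e * t e) (s e * t e)) (- (m' e - Rmin (r e * t e) (s e * t e))) 0).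
    rewrite Rabs_Ropp, Rabs_R0 in T.
    replace (m e * t e - m' e) with ((m e - Rmin (r e) (s e)) * t e + (Rmin (r e) (s e) * t e - Rmin (r e * t e) (s e * t e)) + - (m' e - Rmin (r e * t e) (s e * t e)) + 0) by ring.
    lra.
Qed.

Theorem proposition4p15 :
  (* <= is a partial order on R~_sm *)
  (forall r, SmMod r -> lesm r r) /\
  (forall r s, SmMod r -> SmMod s -> lesm r s -> lesm s r -> eqsm r s) /\
  (forall r s t, SmMod r -> SmMod s -> SmMod t ->
     lesm r s -> lesm s t -> lesm r t) /\
  (* compatibility with the ring operations *)
  (forall r s t, SmMod r -> SmMod s -> SmMod t ->
     lesm r s -> lesm (nadd r t) (nadd s t)) /\
  (forall r s, SmMod r -> SmMod s ->
     lesm nzero r -> lesm nzero s -> lesm nzero (nmul r s)) /\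
  (* min is well defined and is the infimum *)
  (forall r s, SmMod r -> SmMod s -> exists m, is_minsm r s m) /\
  (forall r s m, SmMod r -> SmMod s -> is_minsm r s m ->
     lesm m r /\ lesm m s /\
     (forall u, SmMod u -> lesm u r -> lesm u s -> lesm u m)) /\
  (* max is well defined and is the supremum *)
  (forall r s, SmMod r -> SmMod s -> exists m, is_maxsm r s m) /\
  (forall r s m, SmMod r -> SmMod s -> is_maxsm r s m ->
     lesm r m /\ lesm s m /\
     (forall u, SmMod u -> lesm r u -> lesm s u -> lesm m u)) /\
  (* f-ring property: (r /\ s) t = rt /\ st for t >= 0 *)
  (forall r s t m m', SmMod r -> SmMod s -> SmMod t -> lesm nzero t ->
     is_minsm r s m -> is_minsm (nmul r t) (nmul s t) m' ->
     eqsm (nmul m t) m').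
Proof.
  split; [exact P1|].
  split; [intros r s _ _; apply P2|].
  split; [intros r s t _ _ _; apply P3|].
  split; [intros r s t _ _ Ht; apply P4; auto|].
  split; [exact P5|].
  split; [exact P6|].
  split; [exact P7|].
  split; [exact P8|].
  split; [exact P9|].
  exact P10.
Qed.
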